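(* For a finite-dimensional Lie algebra $L$ over a field $F$, the following are pairwise equivalent: 1. $L$ is primitive of type 1 or of type 3; 2. there is a minimal ideal $B$ of $L$ and a subalgebra $U$ of $L$ such that $U$ is a complement of $B$ in $L$ and $U$ is also a complement of $C_L(B)$ in $L$; 3. there is a minimal ideal $B$ of $L$ such that $L$ is isomorphic to the semidirect sum $B \ltimes L/C_L(B)$ (with $L/C_L(B)$ acting on $B$ via the induced adjoint action).
   Context: The core $U_L$ of a subalgebra $U$ is the largest ideal of $L$ contained in $U$; $L$ is primitive if it has a maximal subalgebra $U$ with $U_L = 0$. A primitive Lie algebra is of type 1 if it has a unique minimal ideal which is abelian; of type 2 if it has a unique minimal ideal which is non-abelian; of type 3 if it has precisely two distinct minimal ideals, each non-abelian. A subalgebra $U$ complements an ideal $A$ if $L = A + U$ and $A \cap U = 0$. $C_L(B) = \{x\in L : [x,B]=0\}$. *)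

(* Defs.v *)
(* Finite-dimensional Lie algebras over a field F are modelled
   as a finite-dimensional F-vector space  L : vectType F  together with a
   bracket  br : L -> L -> L  satisfying the Lie axioms. *)
From HB Require Import structures.
From mathcomp Require Import all_boot all_order all_algebra.
Set Implicit Arguments. Unset Strict Implicit. Unset Printing Implicit Defensive.
Import GRing.Theory.
Local Open Scope ring_scope.

Section LieDefs.
Variable F : fieldType.

Definition is_lie (V : vectType F) (br : V -> V -> V) : Prop :=
  [/\ (forall (a : F) (x y z : V), br (a *: x + y) z = a *: br x z + br y z),
      (forall (a : F) (x y z : V), br z (a *: x + y) = a *: br z x + br z y),
      (forall x : V, br x x = 0) &
      (forall x y z : V, br x (br y z) + br y (br z x) + br z (br x y) = 0)].

Definition is_linear_map (V W : vectType F) (f : V -> W) : Prop :=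
  forall (a : F) (x y : V), f (a *: x + y) = a *: f x + f y.

Definition lie_hom (V W : vectType F) (brV : V -> V -> V) (brW : W -> W -> W)
  (f : V -> W) : Prop :=
  is_linear_map f /\ forall x y, f (brV x y) = brW (f x) (f y).

Definition lie_iso (V W : vectType F) (brV : V -> V -> V) (brW : W -> W -> W)
  (f : V -> W) : Prop := lie_hom brV brW f /\ bijective f.

Variables (L : vectType F) (br : L -> L -> L).

Definition subalg (U : {vspace L}) : Prop :=
  forall x y, x \in U -> y \in U -> br x y \in U.

Definition ideal (I : {vspace L}) : Prop :=
  forall x y, y \in I -> br x y \in I.

Definition max_subalg (U : {vspace L}) : Prop :=
  [/\ subalg U, U != fullv%VS &
      forall V : {vspace L}, subalg V -> (U <= V)%VS -> V = U \/ V = fullv%VS].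

Definition is_core (U C : {vspace L}) : Prop :=
  [/\ ideal C, (C <= U)%VS &
      forall I : {vspace L}, ideal I -> (I <= U)%VS -> (I <= C)%VS].

Definition primitive : Prop :=
  exists U : {vspace L}, max_subalg U /\ is_core U 0%VS.

Definition min_ideal (B : {vspace L}) : Prop :=
  [/\ ideal B, B != 0%VS &
      forall I : {vspace L}, ideal I -> (I <= B)%VS -> I = 0%VS \/ I = B].

Definition abelian_sub (B : {vspace L}) : Prop :=
  forall x y, x \in B -> y \in B -> br x y = 0.

Definition prim_type1 : Prop :=
  primitive /\ exists B, [/\ min_ideal B, abelian_sub B &
                            forall B', min_ideal B' -> B' = B].

Definition prim_type2 : Prop :=
  primitive /\ exists B, [/\ min_ideal B, ~ abelian_sub B &
                            forall B', min_ideal B' -> B' = B].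

Definition prim_type3 : Prop :=
  primitive /\ exists B1 B2,
    [/\ B1 <> B2, min_ideal B1 /\ min_ideal B2,
        ~ abelian_sub B1, ~ abelian_sub B2 &
        forall B', min_ideal B' -> B' = B1 \/ B' = B2].

Definition is_centralizer (B C : {vspace L}) : Prop :=
  forall x, x \in C <-> (forall b, b \in B -> br x b = 0).

Definition complements (U A : {vspace L}) : Prop :=
  (A + U)%VS = fullv%VS /\ (A :&: U)%VS = 0%VS.

(* Bracket of the semidirect sum  B |x Q  on  subvs_of B * Q, where Q acts on B
   via act, and B carries the bracket of L restricted to B. *)
Definition sd_bracket (B : {vspace L}) (Q : vectType F) (brQ : Q -> Q -> Q)
  (act : Q -> subvs_of B -> subvs_of B) (u v : subvs_of B * Q) : subvs_of B * Q :=
  (vsproj B (br (vsval u.1) (vsval v.1)) + act u.2 v.1 - act v.2 u.1,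
   brQ u.2 v.2).

(* The quotient L/C_L(B) is given (up to
   isomorphism) as a Lie algebra Q with a surjective Lie homomorphism
   pi : L -> Q whose kernel is C_L(B); Q acts on B by the induced adjoint
   action  pi(x) . b = [x, b]. *)
Definition iso_semidirect_quot (B : {vspace L}) : Prop :=
  exists (C : {vspace L}) (Q : vectType F) (brQ : Q -> Q -> Q) (pi : L -> Q)
         (act : Q -> subvs_of B -> subvs_of B) (phi : L -> subvs_of B * Q),
    [/\ is_centralizer B C, is_lie brQ /\ lie_hom br brQ pi,
        (forall q : Q, exists x, pi x = q) /\ (forall x, pi x = 0 <-> x \in C),
        (forall x (b : subvs_of B), vsval (act (pi x) b) = br x (vsval b)) &
        lie_iso br (sd_bracket brQ act) phi].

End LieDefs.

(* Main.v *)
Require Import Defs.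
From HB Require Import structures.
From mathcomp Require Import all_boot all_order all_algebra.
From mathcomp Require Import zify.
From Stdlib Require Import Classical.
Set Implicit Arguments. Unset Strict Implicit. Unset Printing Implicit Defensive.
Import GRing.Theory.
Local Open Scope ring_scope.

Section Helpers.
Variable F : fieldType.

Lemma kerE (V W : vectType F) (f : V -> W) : is_linear_map f ->
  {K : {vspace V} | forall x, x \in K = (f x == 0)}.
Proof.
move=> Hf.
pose fL : {linear V -> W} := HB.pack f (GRing.isLinear.Build F V W *:%R f Hf).
exists (lker (linfun fL)) => x; by rewrite memv_ker lfunE.
Qed.

Lemma imgE (V W : vectType F) (f : V -> W) (U : {vspace V}) : is_linear_map f ->
  {I : {vspace W} | forall y, y \in I <-> exists2 x, x \in U & y = f x}.
Proof.
move=> Hf.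
pose fL : {linear V -> W} := HB.pack f (GRing.isLinear.Build F V W *:%R f Hf).
exists (linfun fL @: U)%VS => y; split.
  by case/memv_imgP=> x Ux ->; exists x => //; rewrite lfunE.
by case=> x Ux ->; rewrite -[f x](lfunE fL); apply: memv_img.
Qed.

Lemma vs_eq (V : vectType F) (X Y : {vspace V}) :
  (forall x, x \in X -> x \in Y) -> (forall x, x \in Y -> x \in X) -> X = Y.
Proof. by move=> h1 h2; apply: subv_anti; apply/andP; split; apply/subvP. Qed.
End Helpers.

Section Lie.
Variables (F : fieldType) (L : vectType F) (br : L -> L -> L).
Hypothesis HL : is_lie br.

Lemma brDl x y z : br (x + y) z = br x z + br y z.
Proof. by case: HL => H1 _ _ _; have := H1 1 x y z; rewrite !scale1r. Qed.
Lemma brDr x y z : br z (x + y) = br z x + br z y.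
Proof. by case: HL => _ H1 _ _; have := H1 1 x y z; rewrite !scale1r. Qed.
Lemma br0l z : br 0 z = 0.
Proof. by apply/(addrI (br 0 z)); rewrite -brDl !addr0. Qed.
Lemma br0r z : br z 0 = 0.
Proof. by apply/(addrI (br z 0)); rewrite -brDr !addr0. Qed.
Lemma brZl a x z : br (a *: x) z = a *: br x z.
Proof. by case: HL => H1 _ _ _; have := H1 a x 0 z; rewrite !addr0 br0l addr0. Qed.
Lemma brZr a x z : br z (a *: x) = a *: br z x.
Proof. by case: HL => _ H1 _ _; have := H1 a x 0 z; rewrite !addr0 br0r addr0. Qed.
Lemma brNl x z : br (- x) z = - br x z.
Proof. by rewrite -scaleN1r brZl scaleN1r. Qed.
Lemma brNr x z : br z (- x) = - br z x.
Proof. by rewrite -scaleN1r brZr scaleN1r. Qed.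
Lemma brBl x y z : br (x - y) z = br x z - br y z.
Proof. by rewrite brDl brNl. Qed.
Lemma brBr x y z : br z (x - y) = br z x - br z y.
Proof. by rewrite brDr brNr. Qed.
Lemma brxx x : br x x = 0.
Proof. by case: HL. Qed.
Lemma brC x y : br x y = - br y x.
Proof.
have := brxx (x + y); rewrite brDl !brDr !brxx add0r addr0 => /eqP.
by rewrite addr_eq0 => /eqP.
Qed.
Lemma jacobi x y z : br x (br y z) + br y (br z x) + br z (br x y) = 0.
Proof. by case: HL. Qed.

Lemma brC0 x y : br x y = 0 -> br y x = 0.
Proof. by rewrite brC => /eqP; rewrite oppr_eq0 => /eqP. Qed.

Lemma ideal_subalg (I : {vspace L}) : ideal br I -> subalg br I.
Proof. by move=> hI x y _ yI; apply: hI. Qed.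

Lemma idealR (I : {vspace L}) x y : ideal br I -> x \in I -> br x y \in I.
Proof. by move=> hI xI; rewrite brC memvN; apply: hI. Qed.


Lemma brlinl b : is_linear_map (fun x => br x b).
Proof. by case: HL => H1 _ _ _ a x y; apply: H1. Qed.
Lemma brlinr b : is_linear_map (br b).
Proof. by case: HL => _ H1 _ _ a x y; apply: H1. Qed.

Lemma centralizer_exists (B : {vspace L}) : exists C, is_centralizer br B C.
Proof.
pose K i := sval (kerE (brlinl (vbasis B)`_i)).
have KP i x : x \in K i = (br x (vbasis B)`_i == 0) by rewrite /K; case: kerE.
exists (\bigcap_(i < \dim B) K i)%VS => x; split.
  rewrite memvE => /subv_bigcapP H b bB.
  pose g : {linear L -> L} := HB.pack (br x) (GRing.isLinear.Build F L L *:%R (br x) (brlinr x)).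
  rewrite (coord_vbasis bB) -[br x _]/(g _) linear_sum big1 // => i _.
  rewrite linearZ /=; have := H i isT; rewrite -memvE KP => /eqP ->.
  by rewrite scaler0.
move=> H; rewrite memvE; apply/subv_bigcapP => i _; rewrite -memvE KP.
apply/eqP/H; apply: vbasis_mem; apply: mem_nth.
by rewrite size_tuple.
Qed.

Lemma centralizer_ideal (B C : {vspace L}) :
  ideal br B -> is_centralizer br B C -> ideal br C.
Proof.
move=> hB hC x c /hC cC; apply/hC => b bB.
apply: brC0; have := jacobi b x c.
rewrite (cC b bB) br0r addr0 (cC _ (idealR x hB bB)) addr0.
by [].
Qed.

Lemma sum_subalg (I U : {vspace L}) : ideal br I -> subalg br U -> subalg br (I + U).
Proof.
move=> hI hU x y /memv_addP[i iI [u uU ->]] /memv_addP[i' i'I [u' u'U ->]].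
rewrite brDl !brDr !addrA; apply: memv_add; last exact: hU.
apply: memvD; first apply: memvD.
- exact: hI.
- exact: idealR.
- exact: hI.
Qed.

Lemma core_sub0 (U I : {vspace L}) : is_core br U 0 -> ideal br I -> (I <= U)%VS -> I = 0%VS.
Proof. by case=> _ _ H hI sIU; apply/eqP; rewrite -subv0; apply: H. Qed.

Lemma maxcore_full (U I : {vspace L}) : max_subalg br U -> is_core br U 0 ->
  ideal br I -> I != 0%VS -> (I + U)%VS = fullv.
Proof.
case=> sU nU hmax hcore hI nI.
case: (hmax (I + U)%VS (sum_subalg hI sU) (addvSr I U)) => // E.
by case/eqP: nI; apply: (core_sub0 hcore hI); rewrite -E addvSl.
Qed.

Lemma partA (U B C : {vspace L}) : max_subalg br U -> is_core br U 0 ->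
  ideal br B -> B != 0%VS -> is_centralizer br B C -> C != 0%VS ->
  complements U B /\ complements U C.
Proof.
move=> hmax hcore hB nB hC nC.
have hCi := centralizer_ideal hB hC.
have sU : subalg br U by case: hmax.
have fB := maxcore_full hmax hcore hB nB.
have fC := maxcore_full hmax hcore hCi nC.
split; split=> //; apply: (core_sub0 hcore); rewrite ?capvSr //.
- move=> x y /memv_capP[yB yU].
  have := memvf x; rewrite -fC => /memv_addP[c cC [u uU ->]].
  rewrite brDl (hC c).1 // add0r memv_cap hB //=; exact: sU.
- move=> x y /memv_capP[yC yU].
  have := memvf x; rewrite -fB => /memv_addP[b bB [u uU ->]].
  rewrite brDl (brC0 ((hC y).1 yC b bB)) add0r memv_cap hCi //=; exact: sU.
Qed.

Lemma nz_sub (X Y : {vspace L}) : X != 0%VS -> (forall x, x \in X -> x \in Y) -> Y != 0%VS.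
Proof.
move=> nX h; apply/negP=> /eqP Y0; move: nX; rewrite -vpick0.
by have := h _ (memv_pick X); rewrite Y0 memv0 => ->.
Qed.

Lemma cap_ideal (X Y : {vspace L}) : ideal br X -> ideal br Y -> ideal br (X :&: Y).
Proof.
by move=> hX hY x y /memv_capP[yX yY]; rewrite memv_cap hX ?hY.
Qed.

Lemma min_meet (X Y : {vspace L}) : min_ideal br X -> min_ideal br Y -> X <> Y ->
  (X :&: Y)%VS = 0%VS.
Proof.
case=> hX nX mX [hY nY mY] ne.
case: (mX _ (cap_ideal hX hY) (capvSl X Y)) => // E.
case: (mY X hX); first by rewrite -E capvSr.
  by move=> X0; move: nX; rewrite X0 eqxx.
by [].
Qed.

Lemma c1c2 : prim_type1 br \/ prim_type3 br -> exists B U C : {vspace L},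
  [/\ min_ideal br B, subalg br U, is_centralizer br B C,
      complements U B & complements U C].
Proof.
case=> [[[U [hmax hcore]] [B [hmB hab _]]] | [[U [hmax hcore]] [B1 [B2 [ne [m1 m2] na1 na2 _]]]]].
  have [C hC] := centralizer_exists B.
  have [hB nB _] := hmB.
  have nC : C != 0%VS.
    by apply: (nz_sub nB) => x xB; apply/hC => b bB; apply: hab.
  have [cB cC] := partA hmax hcore hB nB hC nC.
  by exists B, U, C; split=> //; case: hmax.
have [C hC] := centralizer_exists B1.
have [hB nB _] := m1.
have [hB2 nB2 _] := m2.
have nC : C != 0%VS.
  apply: (nz_sub nB2) => x xB; apply/hC => b bB.
  have : br x b \in (B1 :&: B2)%VS by rewrite memv_cap hB // idealR.
  by rewrite (min_meet m1 m2 ne) memv0 => /eqP.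
have [cB cC] := partA hmax hcore hB nB hC nC.
by exists B1, U, C; split=> //; case: hmax.
Qed.

Lemma compl_dim (U X : {vspace L}) : complements U X -> (\dim X + \dim U = \dim {:L})%N.
Proof. by case=> s c; rewrite -dimv_sum_cap s c dimv0 addn0. Qed.

Lemma eq_dim_sub (X Y : {vspace L}) : (forall x, x \in X -> x \in Y) ->
  (\dim Y <= \dim X)%N -> X = Y.
Proof. by move=> h d; apply/eqP; rewrite eqEdim d andbT; apply/subvP. Qed.

Lemma meet0_cent (X Y C : {vspace L}) : ideal br X -> ideal br Y ->
  (X :&: Y)%VS = 0%VS -> is_centralizer br Y C -> forall x, x \in X -> x \in C.
Proof.
move=> hX hY XY hC x xX; apply/hC => y yY.
have : br x y \in (X :&: Y)%VS by rewrite memv_cap hY // idealR.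
by rewrite XY memv0 => /eqP.
Qed.

Lemma nz_dim (X : {vspace L}) : X != 0%VS -> (0 < \dim X)%N.
Proof. by rewrite -dimv_eq0 lt0n. Qed.

Lemma c2_prim (B U C : {vspace L}) : min_ideal br B -> subalg br U ->
  is_centralizer br B C -> complements U B -> complements U C ->
  max_subalg br U /\ is_core br U 0%VS.
Proof.
move=> [hB nB mB] sU hC [sBU cBU] [sCU cCU].
have dB := compl_dim (conj sBU cBU).
have hCi := centralizer_ideal hB hC.
split; last first.
  split.
  - by move=> x y; rewrite !memv0 => /eqP ->; rewrite br0r.
  - exact: sub0v.
  move=> I hI sIU; apply/subvP => x xI; rewrite -cCU memv_cap (subvP sIU) // andbT.
  apply/hC => b bB.
  have : br x b \in (B :&: U)%VS.
    by rewrite memv_cap hB // (subvP sIU) // idealR.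
  by rewrite cBU memv0 => /eqP.
split=> //.
  apply/negP=> /eqP UF; move: nB; rewrite -dimv_eq0.
  by move: dB; rewrite UF => /eqP; rewrite -{2}[\dim fullv]add0n eqn_add2r => ->.
move=> V sV sUV; case: (eqVneq V U) => [->|nVU]; [by left | right].
have dV : (\dim U < \dim V)%N.
  by move: nVU; rewrite eq_sym eqEdim sUV /= ltnNge.
have hVB : ideal br (V :&: B).
  move=> x y /memv_capP[yV yB].
  have := memvf x; rewrite -sCU => /memv_addP[c cC [u uU ->]].
  rewrite brDl (hC c).1 // add0r memv_cap hB // andbT.
  by apply: sV => //; apply: (subvP sUV).
have nVB : (V :&: B)%VS != 0%VS.
  rewrite -dimv_eq0 -lt0n.
  have := dimv_sum_cap V B; have := dimvS (subvf (V + B)).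
  lia.
case: (mB _ hVB (capvSr V B)) => [E|E]; first by rewrite E eqxx in nVB.
apply: subv_anti; rewrite subvf /= -sBU subv_add sUV andbT.
by rewrite -E capvSl.
Qed.

Lemma c2c1 : (exists B U C : {vspace L},
  [/\ min_ideal br B, subalg br U, is_centralizer br B C,
      complements U B & complements U C]) -> prim_type1 br \/ prim_type3 br.
Proof.
case=> B [U [C [hmB sU hC cB cC]]].
have [hmax hcore] := c2_prim hmB sU hC cB cC.
have hprim : primitive br by exists U.
have [hB nB mB] := hmB.
have hCi := centralizer_ideal hB hC.
have dB := compl_dim cB; have dC := compl_dim cC.
have dBC : \dim B = \dim C by lia.
have nC : C != 0%VS by rewrite -dimv_eq0 -dBC dimv_eq0.
case: (classic (abelian_sub br B)) => hab.
  left; split=> //; exists B; split=> // B' hmB'.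
  case: (classic (B' = B)) => // ne; exfalso.
  have m0 := min_meet hmB' hmB ne.
  have [hB' nB' _] := hmB'.
  have sB'C := meet0_cent hB' hB m0 hC.
  have EBC : B = C.
    by apply: eq_dim_sub; [move=> x xB; apply/hC => b bB; apply: hab | rewrite dBC].
  move: nB'; rewrite -subv0 -m0 subv_cap subvv /=; apply/negP/negPn.
  by apply/subvP => x xB'; rewrite EBC sB'C.
right; split=> //.
have mC : min_ideal br C.
  split=> // I hI sIC; case: (eqVneq I 0%VS) => [->|nI]; [by left|right].
  have fI := maxcore_full hmax hcore hI nI.
  apply: eq_dim_sub; first exact/subvP.
  have := dimv_sum_cap I U; rewrite fI; lia.
have neBC : B <> C.
  by move=> E; apply: hab => x y xB yB; apply: (hC x).1; rewrite -?E.
exists B, C; split=> //.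
  move=> habC.
  have mBC := min_meet hmB mC neBC.
  have [C' hC'] := centralizer_exists C.
  have sCC' : forall x, x \in C -> x \in C' by move=> x xC; apply/hC' => c cC0; apply: habC.
  have nC' : C' != 0%VS by apply: (nz_sub nC).
  have [_ cC'] := partA hmax hcore hCi nC hC' nC'.
  have dC' := compl_dim cC'.
  have EC : C = C' by apply: eq_dim_sub => //; lia.
  move: nB; rewrite -subv0 -mBC subv_cap subvv /=; apply/negP/negPn.
  apply/subvP => x xB; rewrite EC; apply/hC' => c cc.
  by apply: brC0; apply: (hC c).1.
move=> B' hmB'; case: (classic (B' = B)) => [|ne]; [by left | right].
have [hB' nB' _] := hmB'.
have sB'C := meet0_cent hB' hB (min_meet hmB' hmB ne) hC.
case: mC => _ _ mC; case: (mC B' hB') => [|E|//].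
  by apply/subvP.
by rewrite E eqxx in nB'.
Qed.

Lemma decomp (X Y : {vspace L}) a y : (X :&: Y)%VS = 0%VS -> a \in X -> y \in Y ->
  daddv_pi X Y (a + y) = a.
Proof.
move=> XY aX yY; rewrite linearD /= daddv_pi_id //.
have YX : (Y :&: X)%VS = 0%VS by rewrite capvC.
have := @daddv_pi_add _ _ X Y y XY (subvP (addvSr X Y) _ yY).
rewrite (daddv_pi_id YX yY) => /eqP.
by rewrite -subr_eq0 addrK => /eqP ->; rewrite addr0.
Qed.

Lemma dsum (X Y : {vspace L}) w : (X :&: Y)%VS = 0%VS -> (X + Y)%VS = fullv ->
  daddv_pi X Y w + daddv_pi Y X w = w.
Proof. by move=> XY f; apply: daddv_pi_add => //; rewrite f memvf. Qed.

Lemma c2c3 (B U C : {vspace L}) : min_ideal br B -> subalg br U ->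
  is_centralizer br B C -> complements U B -> complements U C ->
  iso_semidirect_quot br B.
Proof.
move=> [hB nB mB] sU hC [sBU cBU] [sCU cCU].
have hCi := centralizer_ideal hB hC.
have cUC : (U :&: C)%VS = 0%VS by rewrite capvC.
have cUB : (U :&: B)%VS = 0%VS by rewrite capvC.
have sUC : (U + C)%VS = fullv by rewrite addvC.
have sUB : (U + B)%VS = fullv by rewrite addvC.
pose pU x := daddv_pi U C x.
pose pC x := daddv_pi C U x.
have eUC x : x = pU x + pC x by rewrite dsum.
pose pi x := vsproj U (pU x).
pose brQ (p q : subvs_of U) := vsproj U (br (vsval p) (vsval q)).
pose act (q : subvs_of U) (b : subvs_of B) := vsproj B (br (vsval q) (vsval b)).
pose qB x := daddv_pi B U x.
pose qU x := daddv_pi U B x.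
have eBU x : x = qB x + qU x by rewrite dsum.
pose phi x := (vsproj B (qB x), vsproj U (qU x)).
have vbrQ p q : vsval (brQ p q) = br (vsval p) (vsval q).
  by rewrite vsprojK //; apply: sU; apply: subvsP.
have vpi x : vsval (pi x) = pU x by rewrite vsprojK // memv_pi.
exists C, (subvs_of U), brQ, pi, act, phi; split=> //.
- split.
  + split.
    * move=> a p q r; rewrite /brQ !linearP /= brlinl linearP //.
    * move=> a p q r; rewrite /brQ !linearP /= brlinr linearP //.
    * move=> p; rewrite /brQ brxx. exact: linear0.
    * move=> p q r; apply: subvs_inj; rewrite !linearD /= !vbrQ jacobi.
      by rewrite ?linear0.
  + split.
      by move=> a x y; rewrite /pi /pU !linearP.
    move=> x y; apply: subvs_inj; rewrite vbrQ !vpi.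
    rewrite {1}(eUC x) {1}(eUC y) brDl !brDr -addrA /pU decomp //.
    * by apply: sU; apply: memv_pi.
    * apply: memvD; first exact: hCi (memv_pi _ _ _).
      by apply: memvD; [apply: (idealR _ hCi); apply: memv_pi | apply: hCi; apply: memv_pi].
- split.
    move=> q; exists (vsval q); apply: subvs_inj; rewrite vpi /pU daddv_pi_id //.
    exact: subvsP.
  move=> x; split.
    move=> /(congr1 vsval); rewrite vpi linear0 => px0.
    by rewrite (eUC x) px0 add0r memv_pi.
  move=> xC; apply: subvs_inj; rewrite vpi linear0 /pU -[x]add0r decomp //.
  exact: mem0v.
- move=> x b; have E : br x (vsval b) = br (pU x) (vsval b).
    have h0 : br (pC x) (vsval b) = 0.
      by apply: (hC _).1; [apply: memv_pi | apply: subvsP].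
    by rewrite {1}(eUC x) brDl h0 addr0.
  rewrite /act vpi vsprojK; first by rewrite E.
  by rewrite -E; apply: hB; apply: subvsP.
have qBm x : qB x \in B by apply: memv_pi.
have qUm x : qU x \in U by apply: memv_pi.
split; last first.
  exists (fun p => vsval p.1 + vsval p.2).
    by move=> x /=; rewrite !vsprojK ?memv_pi // -eBU.
  case=> b u /=; rewrite /phi /qB /qU decomp ?subvsP // addrC decomp ?subvsP //.
  by rewrite !vsvalK.
split.
  by move=> a x y; rewrite /phi /qB /qU !linearP.
move=> x y.
have E : br x y = (br (qB x) (qB y) + br (qU x) (qB y) - br (qU y) (qB x))
                   + br (qU x) (qU y).
  by rewrite {1}(eBU x) {1}(eBU y) brDl !brDr (brC (qB x) (qU y)) addrACA addrA.
rewrite /phi /sd_bracket /= /act /brQ !vsprojK ?memv_pi //.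
congr pair.
  rewrite -linearD -linearB; congr (vsproj B _).
  rewrite E /qB decomp //; last by apply: sU.
  apply: memvB; first apply: memvD.
  - exact: hB.
  - exact: hB.
  - exact: hB.
by rewrite E addrC /qU decomp //; [apply: sU | apply: memvB; [apply: memvD|]; apply: hB].
Qed.

End Lie.

Section Lin.
Variable F : fieldType.
Lemma lin0 (V W : vectType F) (f : V -> W) : is_linear_map f -> f 0 = 0.
Proof.
move=> hf; have E := hf 1 0 0; rewrite !scale1r addr0 in E.
by apply/(addrI (f 0)); rewrite addr0 -E.
Qed.
Lemma linD (V W : vectType F) (f : V -> W) x y : is_linear_map f -> f (x + y) = f x + f y.
Proof. by move=> hf; have := hf 1 x y; rewrite !scale1r. Qed.
Lemma pair_eq (A B : Type) (p q : A * B) : p.1 = q.1 -> p.2 = q.2 -> p = q.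
Proof. by case: p q => a b [c d] /= -> ->. Qed.
End Lin.

Section Lie2.
Variables (F : fieldType) (L : vectType F) (br : L -> L -> L).
Hypothesis HL : is_lie br.

Lemma c3c2 (B : {vspace L}) : min_ideal br B -> iso_semidirect_quot br B ->
  exists B U C : {vspace L},
  [/\ min_ideal br B, subalg br U, is_centralizer br B C,
      complements U B & complements U C].
Proof.
move=> [hB nB mB] [C [Q [brQ [pi [act [phi [hC [lieQ hpi] [surj ker] hact [[linphi homphi] bij]]]]]]]].
case: bij => psi h1 h2.
have phi_inj := can_inj h1.
have [linpi hompi] := hpi.
have [_ linQr _ _] := lieQ.
have pi0 : pi 0 = 0 by apply: lin0.
have phi0 : phi 0 = 0 by apply: lin0.
have brQ0 q : brQ q 0 = 0 by apply: lin0 => a x y; apply: linQr.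
have act0b b : act 0 b = 0.
  by apply: subvs_inj; rewrite -pi0 hact br0l // linear0.
have actq0 q : act q 0 = 0.
  have [z <-] := surj q; apply: subvs_inj; rewrite hact !linear0 br0r //.
have sdE x y : phi (br x y) = (vsproj B (br (vsval (phi x).1) (vsval (phi y).1))
    + act (phi x).2 (phi y).1 - act (phi y).2 (phi x).1, brQ (phi x).2 (phi y).2).
  exact: homphi.
have lin1 : is_linear_map (fun x => (phi x).1) by move=> a x y; rewrite linphi.
have lin2 : is_linear_map (fun x => (phi x).2) by move=> a x y; rewrite linphi.
have [B2 B2E] := kerE lin2.
have [U2 U2E] := kerE lin1.
have [C2 hC2] := centralizer_exists HL B2.
have v0 : vsval (0 : subvs_of B) = 0 by rewrite linear0.
have hB2 : ideal br B2.
  by move=> x y; rewrite !B2E sdE /= => /eqP ->; rewrite brQ0.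
have sU2 : subalg br U2.
  move=> x y; rewrite !U2E sdE /= => /eqP -> /eqP ->.
  by rewrite v0 (br0l HL) linear0 !actq0 ?addr0 ?subr0.
have inB2 b : psi (b, 0) \in B2 by rewrite B2E h2.
have inU2 q : psi (0, q) \in U2 by rewrite U2E h2.
have cBU : complements U2 B2.
  split.
    apply: subv_anti; rewrite subvf /=; apply/subvP => x _.
    have -> : x = psi ((phi x).1, 0) + psi (0, (phi x).2).
      apply: phi_inj; rewrite linD // !h2; apply: pair_eq => /=.
        by rewrite addr0.
      by rewrite add0r.
    by apply: memv_add.
  apply/eqP; rewrite -subv0; apply/subvP => x /memv_capP[].
  rewrite B2E U2E memv0 => /eqP e2 /eqP e1; apply/eqP; apply: phi_inj.
  by rewrite phi0; apply: pair_eq.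
have nB2 : B2 != 0%VS.
  apply/negP => /eqP B20.
  have := inB2 (vsproj B (vpick B)); rewrite B20 memv0 => /eqP e.
  move: nB; rewrite -vpick0 => /negP; apply; apply/eqP.
  have := congr1 phi e; rewrite h2 phi0 => /(congr1 fst) /= /(congr1 vsval).
  by rewrite vsprojK ?memv_pick // linear0.
have mB2 : forall I, ideal br I -> (I <= B2)%VS -> I = 0%VS \/ I = B2.
  move=> I hI sIB2.
  have lin1v : is_linear_map (fun x => vsval (phi x).1).
    by move=> a x y; rewrite linphi /=.
  have [J JE] := imgE I lin1v.
  have hJ : ideal br J.
    move=> z y /JE [x xI ->].
    have xB2 : x \in B2 := subvP sIB2 _ xI.
    apply/JE; exists (br (psi (0, pi z)) x); first exact: hI.
    rewrite sdE h2 /=; move: xB2; rewrite B2E => /eqP ->.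
    by rewrite (br0l HL) !linear0 act0b !linear0 add0r ?addr0 ?subr0 hact.
  have sJB : (J <= B)%VS by apply/subvP => y /JE [x _ ->]; apply: subvsP.
  case: (mB J hJ sJB) => EJ; [left | right].
    apply/eqP; rewrite -subv0; apply/subvP => x xI; rewrite memv0.
    have xB2 := subvP sIB2 _ xI.
    have : vsval (phi x).1 \in J by apply/JE; exists x.
    rewrite EJ memv0 => /eqP e1; apply/eqP/phi_inj; rewrite phi0.
    apply: pair_eq => /=; first by apply: subvs_inj; rewrite e1 linear0.
    by move: xB2; rewrite B2E => /eqP.
  apply: vs_eq => [x|y yB2]; first exact: (subvP sIB2).
  have : vsval (phi y).1 \in J by rewrite EJ subvsP.
  case/JE => x xI e; have xB2 := subvP sIB2 _ xI.
  suff -> : y = x by [].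
  apply: phi_inj; apply: pair_eq; first exact: subvs_inj.
  by move: xB2 yB2; rewrite !B2E => /eqP -> /eqP ->.
have inC2 x z : vsval (phi x).1 + z \in C -> (phi x).2 = pi z -> x \in C2.
  move=> hz e; apply/hC2 => y; rewrite B2E => /eqP y2.
  apply: phi_inj; rewrite phi0 sdE e y2 act0b brQ0; apply: pair_eq => //=.
  apply: subvs_inj; rewrite !linearD /= ?linear0 ?addr0 ?subr0 hact vsprojK.
    by rewrite -(brDl HL) (hC _).1 // subvsP.
  by apply: hB; apply: subvsP.
have cCU : complements U2 C2.
  split.
    apply: subv_anti; rewrite subvf /=; apply/subvP => x _.
    pose z := - vsval (phi x).1.
    have -> : x = psi ((phi x).1, pi z) + psi (0, (phi x).2 - pi z).
      apply: phi_inj; rewrite linD // !h2; apply: pair_eq => /=.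
        by rewrite addr0.
      by rewrite addrC subrK.
    apply: memv_add; last exact: inU2.
    by apply: (inC2 _ z); rewrite h2 //= /z subrr mem0v.
  apply/eqP; rewrite -subv0; apply/subvP => x /memv_capP[xC2].
  rewrite U2E memv0 => /eqP x1.
  have [z ez] := surj (phi x).2.
  have zC : z \in C.
    apply/hC => b bB.
    have := (hC2 x).1 xC2 (psi (vsproj B b, 0)) (inB2 _) => brxy0.
    have := congr1 (fun p => vsval p.1) (congr1 phi brxy0).
    rewrite sdE h2 phi0 /= x1 -ez hact vsprojK //.
      by rewrite !linear0 (br0l HL) act0b !linear0 add0r ?subr0 ?addr0 vsprojK.
    by apply: hB; apply: subvsP.
  have q0 : (phi x).2 = 0 by rewrite -ez; apply: (ker z).2.
  apply/eqP/phi_inj; rewrite phi0; exact: pair_eq.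
by exists B2, U2, C2; split.
Qed.

End Lie2.

Theorem theorem1p6 (F : fieldType) (L : vectType F) (br : L -> L -> L)
  (HL : is_lie br) :
  let c1 := prim_type1 br \/ prim_type3 br in
  let c2 := exists (B U C : {vspace L}),
      [/\ min_ideal br B, subalg br U, is_centralizer br B C,
          complements U B & complements U C] in
  let c3 := exists B : {vspace L}, min_ideal br B /\ iso_semidirect_quot br B in
  [/\ c1 <-> c2, c2 <-> c3 & c1 <-> c3].
Proof.
move=> c1 c2 c3.
have h12 : c1 <-> c2 by split; [exact: c1c2 | exact: c2c1].
have h23 : c2 <-> c3.
  split.
    case=> B [U [C [mB sU hC cB cC]]]; exists B; split=> //.
    exact: (c2c3 HL mB sU hC cB cC).
  by case=> B [mB iso]; exact: (c3c2 HL mB iso).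
split=> //; split.
  by move=> h; apply/h23/h12.
by move=> h; apply/h12/h23.
Qed.
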